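(* Let $H=(V,E)$ be a hypergraph all of whose edges have size at most $d$. Then there exists a non-adaptive generalized group testing solution for $H$ of size $O(d\log|E|)$.
   Context: A set $T\subseteq V$ (a ''test'') separates two sets $A,B\subseteq V$ if exactly one of $A\cap T$, $B\cap T$ is empty. A non-adaptive generalized group testing solution for a hypergraph $H=(V,E)$ is a family $\mathcal{T}$ of subsets of $V$ such that for every two distinct $A,B\in E$ some $T\in\mathcal{T}$ separates $A$ and $B$. The $O(\cdot)$ hides an absolute constant. *)

(* Defs.v *)
From mathcomp Require Import all_boot.
Set Implicit Arguments. Unset Strict Implicit. Unset Printing Implicit Defensive.

Definition separates (V : finType) (T A B : {set V}) : bool :=
  (A :&: T == set0) != (B :&: T == set0).

Definition gt_solution (V : finType) (E Tf : {set {set V}}) : Prop :=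
  forall A B, A \in E -> B \in E -> A != B ->
    exists2 T, T \in Tf & separates T A B.

(* Main.v *)
Require Import Defs.
From mathcomp Require Import all_boot zify.
Set Implicit Arguments. Unset Strict Implicit.


Lemma cardsum (I : finType) (A : {set I}) (P : pred I) :
  #|A :&: [set x | P x]| = \sum_(x in A) (P x : nat).
Proof.
rewrite -sum1_card [LHS]big_mkcond [RHS]big_mkcond /=.
by apply: eq_bigr => i _; rewrite !inE; case: (i \in A); case: (P i).
Qed.

Lemma bern_up a b : (a.+1 - b) * a.+1 ^ b <= a.+1 * a ^ b.
Proof.
elim: b => [|b IH]; first by rewrite subn0 !expn0.
rewrite !expnS.
move: IH; set X := a ^ b; set Y := a.+1 ^ b => IH.
case: (leqP b a.+1) => hb.
- have e : a.+1 - b = (a.+1 - b.+1).+1 \/ a.+1 = b by lia.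
  case: e => [e|e].
  + rewrite e in IH. nia.
  + have -> : a.+1 - b.+1 = 0 by lia. by rewrite mul0n.
- have -> : a.+1 - b.+1 = 0 by lia. by rewrite mul0n.
Qed.

Lemma bern_half d b : b <= d -> (2*d).+1 ^ b <= 2 * (2*d) ^ b.
Proof.
move=> hb; have := bern_up (2*d) b.
set X := (2*d) ^ b; set Y := (2*d).+1 ^ b => h.
have h2 : (2*d).+1 * Y <= (2*d).+1 * (2 * X) by nia.
by rewrite leq_pmul2l in h2.
Qed.

Lemma bern_low a k : a ^ k.+1 + k.+1 * a ^ k <= a.+1 ^ k.+1.
Proof.
elim: k => [|k IH]; first by rewrite !expn1 expn0; lia.
move: IH; rewrite (expnS a k.+1) (expnS a.+1 k.+1) (expnS a k).
set X := a ^ k; set Y := a.+1 ^ k.+1 => IH. nia.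
Qed.

Lemma block k : 2 * k ^ k.+1 <= k.+1 ^ k.+1.
Proof.
have := bern_low k k. rewrite (expnS k k). set X := k ^ k. nia.
Qed.

Definition Tof (V : finType) n (f : {ffun V -> 'I_n.+1}) : {set V} := [set x | f x == ord0].

Lemma pair_count (V : finType) d (A B : {set V}) x : x \in A -> x \notin B -> #|B| <= d ->
  (2*d).+1 ^ #|V| <= (4*d+2) * #|[set f : {ffun V -> 'I_(2*d).+1} | separates (Tof f) A B]|.
Proof.
move=> xA xB hB.
set n := (2*d).+1.
pose F := fun y : V => if y == x then pred1 (ord0 : 'I_n)
                      else if y \in B then predC1 (ord0 : 'I_n) else predT.
have sub : [set f : {ffun V -> 'I_n} | f \in family F] \subset
           [set f : {ffun V -> 'I_n} | separates (Tof f) A B].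
  apply/subsetP => f; rewrite !inE => /familyP hf.
  have hx := hf x; rewrite /F eqxx inE in hx.
  rewrite /separates.
  have -> : B :&: Tof f == set0.
    apply/eqP/setP => y; rewrite !inE.
    case yB: (y \in B) => //=.
    have := hf y; rewrite /F yB; case: eqP => [e|_].
      by move: xB; rewrite -e yB.
    by rewrite inE => /negbTE.
  have -> // : A :&: Tof f == set0 = false.
  apply/negbTE/set0Pn; exists x; by rewrite !inE xA.
apply: leq_trans (leq_mul (leqnn _) (subset_leq_card sub)).
have -> : #|[set f : {ffun V -> 'I_n} | f \in family F]| = \prod_(y : V) #|F y|.
  by rewrite cardsE card_family foldrE big_map big_enum.
have pc : forall (P : pred V) c, \prod_(i : V | P i) c = c ^ #|P|.
  by move=> P c; exact: prod_nat_const.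
have -> : n ^ #|V| = \prod_(y : V) n by rewrite prod_nat_const.
rewrite (bigD1 x) // [X in _ <= _ * X](bigD1 x) //=.
rewrite (bigID (mem B)) [X in _ <= _ * (_ * X)](bigID (mem B)) /=.
rewrite /F eqxx card1 mul1n.
rewrite [X in _ <= _ * (X * _)](eq_bigr (fun _ => n.-1)); last first.
  by move=> y /andP [/negbTE -> ->]; rewrite cardC1 card_ord.
rewrite [X in _ <= _ * (_ * X)](eq_bigr (fun _ => n)); last first.
  by move=> y /andP [/negbTE -> /negbTE ->]; rewrite card_ord.
rewrite !pc.
set b := #|_|.
have hb : b <= d.
  apply: leq_trans hB; apply: subset_leq_card; apply/subsetP => y.
  by rewrite unfold_in => /andP [].
have := bern_half hb.
have -> : n.-1 = 2 * d by [].
set Q := n ^ #|_|.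
set X := n ^ b. set Y := (2 * d) ^ b => h.
have -> : 4 * d + 2 = 2 * n by rewrite /n; lia.
nia.
Qed.

Definition Sep (V : finType) (T : {set V}) :=
  [set p : {set V} * {set V} | separates T p.1 p.2].

Lemma sep_sym (V : finType) (T A B : {set V}) : separates T A B = separates T B A.
Proof. by rewrite /separates eq_sym. Qed.

Lemma avg (V : finType) d (R : {set {set V} * {set V}}) :
  (forall p, p \in R -> [/\ p.1 != p.2, #|p.1| <= d & #|p.2| <= d]) ->
  exists T : {set V}, #|R| <= (4*d+2) * #|R :&: Sep T|.
Proof.
move=> hR.
pose s (f : {ffun V -> 'I_(2*d).+1}) := #|R :&: Sep (Tof f)|.
have key : #|R| * (2*d).+1 ^ #|V| <= (4*d+2) * \sum_f s f.
  have -> : \sum_f s f = \sum_(p in R) #|[set f : {ffun V -> 'I_(2*d).+1} | separates (Tof f) p.1 p.2]|.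
    transitivity (\sum_(f : {ffun V -> 'I_(2*d).+1}) \sum_(p in R) (separates (Tof f) p.1 p.2 : nat)).
      apply: eq_bigr => f _; rewrite /s /Sep.
      by rewrite (cardsum R (fun p => separates (Tof f) p.1 p.2)).
    rewrite exchange_big /=; apply: eq_bigr => p _.
    rewrite -(setTI [set f : {ffun V -> 'I_(2*d).+1} | _]).
    rewrite (cardsum setT (fun f : {ffun V -> 'I_(2*d).+1} => separates (Tof f) p.1 p.2)).
    by apply: eq_bigl => f; rewrite inE.
  rewrite -sum_nat_const big_distrr /=; apply: leq_sum => p /hR [ne h1 h2].
  case: (boolP [exists x, (x \in p.1) != (x \in p.2)]) => [/existsP [x hx]|hn].
    case x1: (x \in p.1); rewrite x1 in hx; case x2: (x \in p.2) hx => // _.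
      by apply: (@pair_count V d p.1 p.2 x); rewrite ?x1 ?x2.
    have := @pair_count V d p.2 p.1 x x2 (negbT x1) h1.
    suff -> : [set f : {ffun V -> 'I_(2*d).+1} | separates (Tof f) p.1 p.2] =
      [set f : {ffun V -> 'I_(2*d).+1} | separates (Tof f) p.2 p.1] by [].
    by apply/setP => f; rewrite !inE sep_sym.
  exfalso; move/eqP: ne; apply; apply/setP => x.
  move: hn; rewrite negb_exists => /forallP /(_ x); by rewrite negbK => /eqP.
case: (boolP [exists f, #|R| <= (4*d+2) * s f]) => [/existsP [f hf]|hn].
  by exists (Tof f).
exfalso.
have hs : \sum_(f : {ffun V -> 'I_(2*d).+1}) ((4*d+2) * s f + 1) <= \sum_(f : {ffun V -> 'I_(2*d).+1}) #|R|.
  apply: leq_sum => f _; move: hn; rewrite negb_exists => /forallP /(_ f).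
  by rewrite -ltnNge addn1.
move: hs; rewrite big_split /= -big_distrr /= sum1_card sum_nat_const card_ffun card_ord.
have : 0 < (2*d).+1 ^ #|V| by rewrite expn_gt0.
move: key; move: (\sum_f s f) ((2*d).+1 ^ #|V|) (4*d+2) #|R| => S N K r. nia.
Qed.

Definition rem (V : finType) (Tf : {set {set V}}) (R : {set {set V} * {set V}}) :=
  [set p in R | [forall T in Tf, ~~ separates T p.1 p.2]].

Lemma iterl (V : finType) d t : forall R : {set {set V} * {set V}},
  (forall p, p \in R -> [/\ p.1 != p.2, #|p.1| <= d & #|p.2| <= d]) ->
  exists Tf : {set {set V}}, #|Tf| <= t /\
    (4*d+2)^t * #|rem Tf R| <= (4*d+1)^t * #|R|.
Proof.
elim: t => [|t IH] R hR.
  exists set0; split; first by rewrite cards0.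
  rewrite !expn0 !mul1n; apply: subset_leq_card; apply/subsetP => p.
  by rewrite inE => /andP [].
have [T hT] := avg hR.
have hR1 : forall p, p \in R :\: Sep T -> [/\ p.1 != p.2, #|p.1| <= d & #|p.2| <= d].
  by move=> p; rewrite inE => /andP [_ /hR].
have [Tf1 [hc hr]] := IH _ hR1.
exists (T |: Tf1); split.
  by rewrite cardsU1 -add1n; apply: leq_add => //; apply: leq_b1.
have hsub : #|rem (T |: Tf1) R| <= #|rem Tf1 (R :\: Sep T)|.
  apply: subset_leq_card; apply/subsetP => p; rewrite !inE => /andP [pR /forallP h].
  have h0 := h T; rewrite !inE eqxx /= in h0.
  rewrite pR h0 /=; apply/forallP => T'; apply/implyP => hT'.
  by have := h T'; rewrite !inE hT' orbT.
have hid := cardsID (Sep T) R.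
move: hT hid hr hsub; rewrite !expnS.
have -> : 4 * d + 2 = (4 * d + 1).+1 by lia.
move: (4*d+1) ((4*d+1).+1 ^ t) ((4*d+1) ^ t) #|R| #|R :&: Sep T| #|R :\: Sep T|
  #|rem Tf1 (R :\: Sep T)| #|rem (T |: Tf1) R| => M Kt Mt r s r1 r' rm.
move=> hT hid hr hsub.
have h1 : M.+1 * r1 <= M * r by nia.
apply: (leq_trans (n := M.+1 * (Kt * r'))).
  by rewrite mulnA leq_mul2l hsub orbT.
apply: (leq_trans (n := M.+1 * (Mt * r1))); first by rewrite leq_mul2l hr orbT.
rewrite mulnCA (mulnC M Mt) -mulnA leq_mul2l h1 orbT //.
Qed.

Theorem corollary1 : exists C : nat,
  forall (V : finType) (E : {set {set V}}) (d : nat),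
    (forall A, A \in E -> #|A| <= d) ->
    exists Tf : {set {set V}},
      gt_solution E Tf /\ #|Tf| <= C * d * up_log 2 #|E|.
Proof.
exists 18 => V E d hd.
case: (leqP #|E| 1) => hE.
  exists set0; split; last by rewrite cards0.
  move=> A B hA hB hAB; exfalso.
  move/card_le1P: hE => h; have := h A hA B; rewrite hB inE => /esym/eqP e.
  by rewrite e eqxx in hAB.
have d0 : 0 < d.
  rewrite lt0n; apply/negP => /eqP d0.
  have : E \subset [set set0].
    apply/subsetP => A hA; rewrite inE; apply/eqP/cards0_eq.
    by have := hd A hA; rewrite d0 leqn0 => /eqP.
  by move/subset_leq_card; rewrite cards1; lia.
set L := up_log 2 #|E|.
have hL : 0 < L by rewrite up_log_gt0 hE.
have hm : #|E| <= 2 ^ L by exact: up_logP.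
pose R0 := [set p : {set V} * {set V} | (p.1 \in E) && (p.2 \in E) && (p.1 != p.2)].
have hR0 : forall p, p \in R0 -> [/\ p.1 != p.2, #|p.1| <= d & #|p.2| <= d].
  by move=> p; rewrite inE => /andP [/andP [h1 h2] h3]; split => //; apply: hd.
set k := (2 * L).+1.
have [Tf [hc hr]] := iterl ((4*d+2) * k) hR0.
have hR0c : #|R0| <= 2 ^ L * 2 ^ L.
  apply: leq_trans (leq_mul hm hm); rewrite -cardsX; apply: subset_leq_card.
  by apply/subsetP => p; rewrite !inE => /andP [/andP [-> ->] _].
have hb : 2 ^ k * (4*d+1) ^ ((4*d+2) * k) <= (4*d+2) ^ ((4*d+2) * k).
  have := block (4*d+1).
  rewrite -(leq_exp2r _ _ (ltn0Sn (2 * L))) -/k expnMn -!expnM.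
  by have -> : (4*d+1).+1 = 4*d+2 by lia.
have hP : 2 * (2 ^ L * 2 ^ L) = 2 ^ k by rewrite /k -expnD addnn -mul2n expnS.
have hQ : 0 < (4*d+2) ^ ((4*d+2) * k) by rewrite expn_gt0 addn2.
have h0 : #|rem Tf R0| = 0.
  have hX : 0 < 2 ^ L * 2 ^ L by rewrite muln_gt0 !expn_gt0.
  move: hr hb hP hQ hR0c hX.
  move: ((4*d+2) ^ ((4*d+2) * k)) ((4*d+1) ^ ((4*d+2) * k)) (2 ^ k) (2 ^ L * 2 ^ L)
    #|rem Tf R0| #|R0| => Q S P X rm r0 hr hb hP hQ hR0c hX.
  have h1 : P * (Q * rm) <= Q * r0.
    apply: (leq_trans (n := P * (S * r0))); first by rewrite leq_mul2l hr orbT.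
    by rewrite mulnA leq_mul2r hb orbT.
  case: rm hr h1 => // rm _ h1; exfalso.
  have h2 : Q * P <= Q * r0.
    apply: leq_trans h1; rewrite mulnC leq_mul2l; apply/orP; right.
    by rewrite -{1}(muln1 Q) leq_mul2l ltn0Sn orbT.
  rewrite leq_mul2l in h2; case/orP: h2 => [/eqP hq|]; first by rewrite hq in hQ.
  lia.
exists Tf; split.
  move=> A B hA hB hAB.
  have : (A, B) \notin rem Tf R0 by rewrite (cards0_eq h0) inE.
  rewrite !inE /= hA hB hAB /= negb_forall => /existsP [T].
  by rewrite negb_imply negbK => /andP [hT hs]; exists T.
apply: leq_trans hc _.
rewrite /k; clear -hL d0; clearbody L; nia.
Qed.
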